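(* Let $x\in\mathcal{X}$, $\delta\in[0,1]$ and $x'=\eta(x,\delta)$. Then $x'\in\mathcal{X}$ and $\|x'-x\|\le\delta$, with strict inequality when $\delta>0$. Furthermore, when $\delta>0$, $x'\notin\partial\mathcal{X}$.
   Context: Fix $D\ge1$, Euclidean norm $\|\cdot\|$ on $\mathbb{R}^D$. For $A\subseteq\mathbb{R}^D$ let $d(z,A)=\inf_{a\in A}\|z-a\|$, $\mathrm{Med}(A)=\{z:\exists p\neq q\in A,\ \|p-z\|=\|q-z\|=d(z,A)\}$, and reach $\tau_A=\inf_{a\in A}d(a,\mathrm{Med}(A))$. Let $\mathcal{X}'\subset\mathbb{R}^D$ be nonempty compact with reach $\tau_{\mathcal{X}'}>0$, fix $0<\epsilon_I<\min\{\tau_{\mathcal{X}'},1\}$, and set $\mathcal{X}=\{x\in\mathbb{R}^D:d(x,\mathcal{X}')\le\epsilon_I\}$. Let $\zeta\colon\mathcal{X}\to\mathcal{X}'$ map $x$ to the (unique) point $\zeta(x)\in\mathcal{X}'$ with $\|x-\zeta(x)\|=d(x,\mathcal{X}')$, and define $\eta\colon\mathcal{X}\times[0,1]\to\mathbb{R}^D$ by $\eta(x,\delta)=x+\delta(\zeta(x)-x)$. *)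

(* Defs.v *)
From HB Require Import structures.
From mathcomp Require Import all_boot all_order all_algebra.
From mathcomp Require Import all_classical all_reals all_analysis.
Set Implicit Arguments. Unset Strict Implicit. Unset Printing Implicit Defensive.
Import Order.TTheory GRing.Theory Num.Theory.
Import numFieldNormedType.Exports.
Local Open Scope classical_set_scope.
Local Open Scope ring_scope.

Definition enorm {R : realType} {D : nat} (v : 'rV[R]_D) : R :=
  Num.sqrt (\sum_(i < D) (v ord0 i) ^+ 2).

(* d(z, A) = inf_{a in A} ||z - a||, extended-real valued (+oo for A empty) *)
Definition setdist {R : realType} {D : nat} (z : 'rV[R]_D) (A : set 'rV[R]_D)
  : \bar R := ereal_inf [set (enorm (z - a))%:E | a in A].

Definition Med {R : realType} {D : nat} (A : set 'rV[R]_D) : set 'rV[R]_D :=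
  [set z | exists p q, [/\ A p, A q, p != q,
     (enorm (p - z))%:E = setdist z A & (enorm (q - z))%:E = setdist z A]].

Definition reach {R : realType} {D : nat} (A : set 'rV[R]_D) : \bar R :=
  ereal_inf [set setdist a (Med A) | a in A].

Definition tube {R : realType} {D : nat} (A : set 'rV[R]_D) (eps : R)
  : set 'rV[R]_D := [set x | (setdist x A <= eps%:E)%E].

Definition boundary {R : realType} {D : nat} (A : set 'rV[R]_D) : set 'rV[R]_D :=
  closure A `\` interior A.

Definition eta_map {R : realType} {D : nat} (zeta : 'rV[R]_D -> 'rV[R]_D)
  (x : 'rV[R]_D) (delta : R) : 'rV[R]_D := x + delta *: (zeta x - x).

(* Main.v *)
Require Import Defs.
From HB Require Import structures.
From mathcomp Require Import all_boot all_order all_algebra.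
From mathcomp Require Import all_classical all_reals all_analysis.
From mathcomp Require Import ring lra.
Import Order.TTheory GRing.Theory Num.Theory.
Import numFieldNormedType.Exports.
Local Open Scope classical_set_scope.
Local Open Scope ring_scope.

Lemma sumsq_ge0 (R : realType) (D : nat) (v : 'rV[R]_D) :
  0 <= \sum_(i < D) (v ord0 i) ^+ 2.
Proof. by apply: sumr_ge0 => i _; exact: sqr_ge0. Qed.

Lemma enorm_ge0 (R : realType) (D : nat) (v : 'rV[R]_D) : 0 <= enorm v.
Proof. exact: sqrtr_ge0. Qed.

Lemma enorm_sq (R : realType) (D : nat) (v : 'rV[R]_D) :
  enorm v ^+ 2 = \sum_(i < D) (v ord0 i) ^+ 2.
Proof. by rewrite /enorm sqr_sqrtr // sumsq_ge0. Qed.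

Lemma enormZ (R : realType) (D : nat) (c : R) (v : 'rV[R]_D) :
  enorm (c *: v) = `|c| * enorm v.
Proof.
rewrite /enorm.
rewrite (eq_bigr (fun i => c ^+ 2 * (v ord0 i) ^+ 2)); last first.
  by move=> i _; rewrite mxE exprMn.
by rewrite -mulr_sumr sqrtrM ?sqr_ge0 // sqrtr_sqr.
Qed.

Lemma setdist_le (R : realType) (D : nat) (y z : 'rV[R]_D) (A : set 'rV[R]_D) :
  A z -> (setdist y A <= (enorm (y - z))%:E)%E.
Proof. by move=> Az; apply: ereal_inf_lbound; exists z. Qed.

Lemma entry_sq_le (R : realType) (D : nat) (v : 'rV[R]_D) i :
  (v ord0 i) ^+ 2 <= enorm v ^+ 2.
Proof.
rewrite enorm_sq (bigD1 i) //= lerDl.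
by apply: sumr_ge0 => j _; exact: sqr_ge0.
Qed.

Arguments setdist_le {R D} y {z A}.
Arguments entry_sq_le {R D}.
Arguments enorm_sq {R D}.

Lemma term_bound (R : realType) (u v r : R) :
  `|u| <= r -> v ^+ 2 <= 1 -> (u + v) ^+ 2 <= v ^+ 2 + (r ^+ 2 + 2 * r).
Proof.
move=> /ler_normlP [h1 h2] hv.
have hv1 : -1 <= v <= 1.
  by apply/andP; split; nra.
case/andP: hv1 => hv1 hv2.
nra.
Qed.

Theorem lemma1 (R : realType) (D : nat) (X' : set 'rV[R]_D) (epsI : R)
  (zeta : 'rV[R]_D -> 'rV[R]_D) (x : 'rV[R]_D) (delta : R) :
  (0 < D)%N ->
  X' !=set0 -> compact X' -> (0 < reach X')%E ->
  0 < epsI -> (epsI%:E < reach X')%E -> epsI < 1 ->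
  (forall y, tube X' epsI y ->
     X' (zeta y) /\ (enorm (y - zeta y))%:E = setdist y X') ->
  tube X' epsI x -> 0 <= delta <= 1 ->
  let x' := eta_map zeta x delta in
  [/\ tube X' epsI x',
      enorm (x' - x) <= delta &
      0 < delta -> enorm (x' - x) < delta /\ ~ boundary (tube X' epsI) x'].
Proof.
move=> D0 _ _ _ e0 _ e1 Hz Hx /andP[d0 d1] x'.
have [Xz Ez] := Hz x Hx.
set z := zeta x in Xz Ez.
set e := enorm (x - z) in Ez.
have e_ge0 : 0 <= e by exact: enorm_ge0.
have he : e <= epsI.
  by rewrite -lee_fin Ez; exact: Hx.
have Ex'x : x' - x = (- delta) *: (x - z).
  apply/rowP => i; rewrite /x' /eta_map !mxE. ring.
have Ex'z : x' - z = (1 - delta) *: (x - z).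
  apply/rowP => i; rewrite /x' /eta_map !mxE. ring.
have Nx'x : enorm (x' - x) = delta * e.
  by rewrite Ex'x enormZ normrN ger0_norm.
have Nx'z : enorm (x' - z) = (1 - delta) * e.
  by rewrite Ex'z enormZ ger0_norm // subr_ge0.
split.
- rewrite /tube /=; apply: (le_trans (setdist_le x' Xz)).
  by rewrite lee_fin Nx'z; nra.
- by rewrite Nx'x; nra.
move=> dpos; split; first by rewrite Nx'x; nra.
case=> _; apply.
set s := (1 - delta) * e.
have s_ge0 : 0 <= s by rewrite /s; nra.
have s_lt : s < epsI by rewrite /s; nra.
set k := epsI ^+ 2 - s ^+ 2.
have k0 : 0 < k by rewrite /k; nra.
have D0' : 0 < (D%:R : R) by rewrite ltr0n.
set r := Num.min 1 (k / (3 * D%:R)).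
have r0 : 0 < r by rewrite lt_min ltr01 divr_gt0 // mulr_gt0.
have r1 : r <= 1 by rewrite ge_min lexx.
have r2 : r * (3 * D%:R) <= k.
  by rewrite -ler_pdivlMr ?mulr_gt0 // ge_min lexx orbT.
rewrite /interior /=; apply/nbhs_ballP; exists r => // y [_ /= By].
rewrite /tube /=; apply: (le_trans (setdist_le y Xz)).
rewrite lee_fin.
have -> : y - z = (y - x') + (x' - z) by rewrite addrA subrK.
set u := y - x'; set v := x' - z.
have Hv : enorm v = s by rewrite /v Nx'z.
rewrite /enorm -(ger0_norm (ltW e0)) -sqrtr_sqr; apply: ler_wsqrtr.
apply: (le_trans (y := \sum_(i < D) ((v ord0 i) ^+ 2 + (r ^+ 2 + 2 * r)))).
  apply: ler_sum => i _; rewrite mxE; apply: term_bound.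
    rewrite /u !mxE distrC; apply: ltW; move: (By ord0 i); by rewrite /ball /= /x' /eta_map !mxE.
  apply: (le_trans (entry_sq_le v i)); rewrite Hv; nra.
rewrite big_split /= -enorm_sq Hv sumr_const card_ord -mulr_natr.
have rr : r ^+ 2 <= r by rewrite expr2 ler_piMr // ltW.
rewrite -[_ *+ D]mulr_natr.
rewrite /k in r2. nra.
Qed.
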